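(* Let $\Omega\subset\mathbb R^d$ be a bounded Borel set, $f:\Omega\to[0,\infty)$ with $\int_\Omega f=1$, $p\ge1$, $x_1,x_2\in\Omega$, $h_1,h_2:[0,1]\to[0,\infty)$ continuous and non-decreasing, and $\kappa\in\mathbb N$, $\kappa\ge1$. Assume $G$ is strictly Lipschitz with constant $\kappa$, i.e. $|G(s)-G(t)|<\kappa|s-t|$ for all $s\ne t$. Let $t_1,\dots,t_\kappa\in\mathbb R$ be arbitrary and define for $n\ge\kappa$ $$t_{n+1}=\frac1\kappa\sum_{m=n-\kappa+1}^nG(t_m),$$ and for $n>\kappa$ let $\psi_n(x)=0$ if $\tau(x)<t_n$, $\psi_n(x)=1$ otherwise. Then $t_n\to\bar t$ and $\psi_n\to\bar\psi$ uniformly on every compact subset of $\Omega\setminus\{\tau=\bar t\}$.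
   Context: $\tau(x)=|x-x_1|^p-|x-x_2|^p$, $m(t)=\int_{\{x\in\Omega:\tau(x)<t\}}f\,dx$, $G(t)=h_2(1-m(t))-h_1(m(t))$. There is a unique $\bar t$ with $G(\bar t)=\bar t$, and $\bar\psi(x)=0$ if $\tau(x)<\bar t$, $\bar\psi(x)=1$ if $\tau(x)>\bar t$ (the unique equilibrium). *)

(* Defs.v *)
From HB Require Import structures.
From mathcomp Require Import all_boot all_order all_algebra.
From mathcomp Require Import all_classical all_reals all_analysis.
Set Implicit Arguments. Unset Strict Implicit. Unset Printing Implicit Defensive.
Import Order.TTheory GRing.Theory Num.Theory.
Import numFieldNormedType.Exports.
Local Open Scope classical_set_scope.
Local Open Scope ring_scope.

(* For measure theory we identify R^d with d.-tuple R, which carries the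
   library product sigma-algebra (= Borel sigma-algebra of R^d). *)
Definition tup2row {R : realType} {d : nat} (t : d.-tuple R) : 'rV[R]_d :=
  \row_i tnth t i.

(* Lebesgue integral over R^d of a function into \bar R, as the iterated
   one-dimensional Lebesgue integral (equal, by Tonelli, to the integral
   w.r.t. the d-dimensional Lebesgue measure for nonnegative measurable
   integrands, which is the only use below). *)
Fixpoint lebint_tuple {R : realType} (n : nat) : (n.-tuple R -> \bar R) -> \bar R :=
  match n with
  | 0 => fun g => g [tuple]
  | n'.+1 => fun g =>
      (\int[@lebesgue_measure R]_(x in [set: R])
         lebint_tuple (fun t : n'.-tuple R => g [tuple of x :: t]))%E
  end.

Definition lebint {R : realType} {d : nat} (g : 'rV[R]_d -> \bar R) : \bar R :=
  lebint_tuple (fun t : d.-tuple R => g (tup2row t)).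

Definition enorm {R : realType} {d : nat} (x : 'rV[R]_d) : R :=
  Num.sqrt (\sum_(i < d) x ord0 i ^+ 2).

Definition tau {R : realType} {d : nat} (p : R) (x1 x2 x : 'rV[R]_d) : R :=
  powR (enorm (x - x1)) p - powR (enorm (x - x2)) p.

Definition mass {R : realType} {d : nat} (Omega : set 'rV[R]_d) (f : 'rV[R]_d -> R)
  (p : R) (x1 x2 : 'rV[R]_d) (t : R) : R :=
  fine (lebint (fun x => ((\1_(Omega `&` [set y | tau p x1 x2 y < t]) x) * f x)%:E)).

Definition Gfun {R : realType} {d : nat} (Omega : set 'rV[R]_d) (f : 'rV[R]_d -> R)
  (p : R) (x1 x2 : 'rV[R]_d) (h1 h2 : R -> R) (t : R) : R :=
  h2 (1 - mass Omega f p x1 x2 t) - h1 (mass Omega f p x1 x2 t).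

Definition psi_of {R : realType} {d : nat} (p : R) (x1 x2 : 'rV[R]_d) (t : R)
  (x : 'rV[R]_d) : R :=
  if tau p x1 x2 x < t then 0 else 1.

(* the equilibrium psibar: 0 if tau < tbar, 1 if tau > tbar
   (value on {tau = tbar} irrelevant; set to 1) *)
Definition psibar {R : realType} {d : nat} (p : R) (x1 x2 : 'rV[R]_d) (tbar : R)
  (x : 'rV[R]_d) : R :=
  if tau p x1 x2 x < tbar then 0 else 1.

(* Main.v *)
Require Import Defs.
From HB Require Import structures.
From mathcomp Require Import all_boot all_order all_algebra.
From mathcomp Require Import all_classical all_reals all_analysis.
From mathcomp Require Import lra zify ring.
Import Order.TTheory GRing.Theory Num.Theory.
Import numFieldNormedType.Exports.
Local Open Scope classical_set_scope.
Local Open Scope ring_scope.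

Lemma lip1_cont (R : realType) (f : R -> R) :
  (forall x y, `|f x - f y| <= `|x - y|) -> continuous f.
Proof.
move=> H x; apply/cvgrPdist_lt => e e0.
near=> y; apply: (le_lt_trans (H x y)).
near: y; apply: cvgr_dist_lt => //; exact: cvg_id.
Unshelve. all: by end_near.
Qed.

Section ZSeq.
Variables (R : realType) (k : nat) (Z : nat -> R) (phi : R -> R) (M : R).
Hypothesis rec : forall n, (k <= n)%N -> Z n.+1 = Z n + phi (Z n - Z (n - k)).
Hypothesis P1 : forall x : R, x <= 0 -> 0 <= phi x.
Hypothesis P2 : forall x : R, 0 < x -> 0 < x + phi x.
Hypothesis cphi : continuous phi.
Hypothesis bnd : forall n, (k <= n)%N -> Z n - Z (n - k) <= M.

Definition winL n a := forall i, (n - k <= i <= n)%N -> a <= Z i.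

Lemma lowL_step n a : (k <= n)%N -> a <= Z n -> a <= Z (n - k) -> a <= Z n.+1.
Proof.
move=> kn h1 h2; rewrite rec //.
have [x0|x0] := lerP (Z n - Z (n - k)) 0.
  by have := P1 _ x0; lra.
by have := P2 _ x0; lra.
Qed.

Lemma winL_step n a : (k <= n)%N -> winL n a -> winL n.+1 a.
Proof.
move=> kn w i /andP[h1 h2].
have [hi|hi] := leqP i n.
  by apply: w; apply/andP; split => //; lia.
have -> : i = n.+1 by lia.
by apply: lowL_step => //; apply: w; apply/andP; split => //; lia.
Qed.

Lemma winL_iter n a j : (k <= n)%N -> winL n a -> winL (n + j) a.
Proof.
move=> kn w; elim: j => [|j IH]; first by rewrite addn0.
by rewrite addnS; apply: winL_step => //; lia.
Qed.

Lemma stepL (L : R) : 0 < L -> exists L', 0 < L' /\ forall n a, (k <= n)%N ->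
  a <= Z (n - k) -> a + L <= Z n -> a + L' <= Z n.+1.
Proof.
move=> L0.
pose f x := x + phi x.
have cf : continuous f by move=> x; apply: cvgD; [exact: cvg_id|exact: cphi].
have hab : L / 2 <= Num.max (L / 2) M by rewrite le_max lexx.
have [c cI cmin] := @EVT_min R f (L/2) (Num.max (L / 2) M) hab
  (continuous_subspaceT cf).
have c0 : 0 < c.
  move: cI; rewrite in_itv /= => /andP[h _].
  by apply: lt_le_trans h; rewrite divr_gt0.
have fc0 : 0 < f c by exact: P2.
exists (Num.min (L/2) (f c)); split; first by rewrite lt_min fc0 divr_gt0.
move=> n a kn h1 h2; rewrite rec //.
have m1 : Num.min (L/2) (f c) <= L/2 by rewrite ge_min lexx.
have m2 : Num.min (L/2) (f c) <= f c by rewrite ge_min lexx orbT.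
have [x0|x0] := lerP (Z n - Z (n - k)) 0.
  by have := P1 _ x0; lra.
have := P2 _ x0; rewrite /f => fx.
have [xL|xL] := ltrP (Z n - Z (n - k)) (L / 2).
  by lra.
have : f c <= f (Z n - Z (n - k)).
  apply: cmin; rewrite in_itv /= xL /= le_max; apply/orP; right; exact: bnd.
move=> H; rewrite /f in m2 H; lra.
Qed.

Lemma chainL p (L : R) : 0 < L -> exists L', 0 < L' /\ L' <= L /\
  forall n a, (k <= n)%N -> winL n a -> a + L <= Z n ->
  forall j, (j <= p)%N -> a + L' <= Z (n + j).
Proof.
move=> L0; elim: p => [|p [L1 [L10 [L1L H1]]]].
  exists L; split => //; split => // n a kn w h j.
  by rewrite leqn0 => /eqP ->; rewrite addn0.
have [L2 [L20 H2]] := stepL _ L10.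
exists (Num.min L1 L2); split; first by rewrite lt_min L10 L20.
have m1 : Num.min L1 L2 <= L1 by rewrite ge_min lexx.
have m2 : Num.min L1 L2 <= L2 by rewrite ge_min lexx orbT.
split; first by apply: le_trans m1 L1L.
move=> n a kn w h j; rewrite leq_eqVlt => /orP[/eqP->|jp].
  rewrite addnS; apply: le_trans (_ : a + L2 <= _); first by rewrite lerD2l.
  apply: H2; first by lia.
    have w' := @winL_iter n a p kn w.
    by apply: w'; apply/andP; split => //; lia.
  exact: (H1 n a kn w h p (leqnn p)).
apply: le_trans (H1 n a kn w h j _); first by rewrite lerD2l.
by lia.
Qed.

End ZSeq.

Lemma conv_t (R : realType) (k : nat) (G : R -> R) (tbar : R) (t : nat -> R) :
  (1 <= k)%N ->
  (forall s u, s != u -> `|G s - G u| < k%:R * `|s - u|) ->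
  (forall s s' : R, s <= s' -> G s' <= G s) ->
  G tbar = tbar ->
  (forall n, (k <= n)%N -> t n.+1 = k%:R^-1 * \sum_(n - k + 1 <= m < n.+1) G (t m)) ->
  forall eps : R, 0 < eps -> exists N, forall n, (N <= n)%N -> `|t n - tbar| < eps.
Proof.
move=> k1 HL Hmon Hfix Hrec.
have kpos : 0 < k%:R :> R by rewrite ltr0n.
have kne : k%:R != 0 :> R by rewrite gt_eqF.
pose u m := G (t m) - tbar.
pose Z n := \sum_(0 <= m < n.+1) u m.
pose phi x := G (tbar + x / k%:R) - tbar.
have Zdiff n : (k <= n)%N -> Z n - Z (n - k)%N = k%:R * (t n.+1 - tbar).
  move=> kn; rewrite Hrec // /Z (@big_cat_nat _ _ _ (n - k + 1)%N) //=; last by lia.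
  rewrite addn1 addrC addrK /u sumrB sumr_const_nat.
  have -> : (n.+1 - (n - k).+1 = k)%N by lia.
  rewrite mulrBr mulrA mulfV // mul1r mulr_natl; lra.
have Zrec n : (k <= n)%N -> Z n.+1 = Z n + phi (Z n - Z (n - k)%N).
  move=> kn; rewrite Zdiff // /phi /Z big_nat_recr //= /u.
  congr (_ + (G _ - _)); field; exact: kne.
have GL s v : `|G s - G v| <= k%:R * `|s - v|.
  have [->|sv] := eqVneq s v; first by rewrite !subrr normr0 mulr0.
  exact/ltW/HL.
have phiL x y : `|phi x - phi y| <= `|x - y|.
  rewrite /phi (_ : forall a b c : R, a - c - (b - c) = a - b); last by move=> *; ring.
  apply: le_trans (GL _ _) _.
  rewrite (_ : tbar + x / k%:R - (tbar + y / k%:R) = (x - y) / k%:R); last by ring.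
  by rewrite normrM normfV normr_nat mulrCA mulfV // mulr1.
have cphi : continuous phi by exact: lip1_cont.
have P1 x : x <= 0 -> 0 <= phi x.
  move=> x0; rewrite /phi subr_ge0 -{1}Hfix; apply: Hmon.
  by rewrite gerDl pmulr_lle0 // invr_gt0.
have P1' x : 0 <= x -> phi x <= 0.
  move=> x0; rewrite /phi subr_le0 -{2}Hfix; apply: Hmon.
  by rewrite lerDl divr_ge0 // ltW.
have P2 x : 0 < x -> 0 < x + phi x.
  move=> x0.
  have := HL (tbar + x / k%:R) tbar.
  rewrite addrAC subrr add0r Hfix normrM normfV normr_nat gtr0_norm //.
  rewrite mulrCA mulfV // mulr1 => /(_ _)/=.
  have xk : x / k%:R != 0 by rewrite mulf_neq0 // ?invr_eq0 // gt_eqF.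
  rewrite -subr_eq0 addrAC subrr add0r xk => /(_ isT).
  by rewrite ltr_norml /phi => /andP[h _]; lra.
have P2' x : x < 0 -> x + phi x < 0.
  move=> x0.
  have := HL (tbar + x / k%:R) tbar.
  rewrite addrAC subrr add0r Hfix normrM normfV normr_nat ltr0_norm //.
  rewrite mulrCA mulfV // mulr1 => /(_ _)/=.
  have xk : x / k%:R != 0 by rewrite mulf_neq0 // ?invr_eq0 // lt_eqF.
  rewrite -subr_eq0 addrAC subrr add0r xk => /(_ isT).
  by rewrite ltr_norml /phi => /andP[_ h]; lra.

pose Zr n := - Z n.
pose phir x := - phi (- x).
have Zrrec n : (k <= n)%N -> Zr n.+1 = Zr n + phir (Zr n - Zr (n - k)%N).
  move=> kn; rewrite /Zr /phir Zrec //.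
  rewrite (_ : - (- Z n - - Z (n - k)%N) = Z n - Z (n - k)%N); last by lra.
  lra.
have P1r x : x <= 0 -> 0 <= phir x.
  by move=> x0; rewrite /phir oppr_ge0; apply: P1'; rewrite oppr_ge0.
have P2r x : 0 < x -> 0 < x + phir x.
  by move=> x0; have := P2' (- x); rewrite oppr_lt0 /phir => /(_ x0); lra.
have cphir : continuous phir.
  apply: lip1_cont => x y; rewrite /phir.
  rewrite (_ : - phi (- x) - - phi (- y) = phi (- y) - phi (- x)); last by ring.
  apply: le_trans (phiL _ _) _.
  by rewrite (_ : - y - - x = x - y) //; ring.
have iterL := winL_iter R k Z phi Zrec P1 P2.
have iterR := winL_iter R k Zr phir Zrrec P1r P2r.
pose S := \sum_(i < k.+1) `|Z i|.
have ZS i : (i <= k)%N -> `|Z i| <= S.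
  move=> ik; have ik' : (i < k.+1)%N by lia.
  rewrite /S (bigD1 (Ordinal ik')) //= lerDl; exact: sumr_ge0.
have w0L : winL R k Z k (- S).
  by move=> i /andP[_ h]; have := ZS i h; rewrite ler_norml => /andP[].
have w0R : winL R k Zr k (- S).
  by move=> i /andP[_ h]; have := ZS i h; rewrite ler_norml /Zr => /andP[_ ?]; lra.
have Zb i : `|Z i| <= S.
  have [ik|ik] := leqP i k; first exact: ZS.
  have h1 := iterL k (- S) (i - k)%N (leqnn k) w0L.
  have h2 := iterR k (- S) (i - k)%N (leqnn k) w0R.
  rewrite subnKC in h1 h2; last by lia.
  have a1 := h1 i.
  have a2 := h2 i.
  rewrite ler_norml; apply/andP; split.
    by apply: a1; apply/andP; split => //; lia.
  suff : - S <= Zr i by rewrite /Zr; lra.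
  by apply: a2; apply/andP; split => //; lia.
pose M := S + S.
have bndL n : (k <= n)%N -> Z n - Z (n - k)%N <= M.
  move=> _; have := Zb n; have := Zb (n - k)%N; rewrite !ler_norml /M.
  move=> /andP[? ?] /andP[? ?]; lra.
have bndR n : (k <= n)%N -> Zr n - Zr (n - k)%N <= M.
  move=> _; have := Zb n; have := Zb (n - k)%N; rewrite !ler_norml /M /Zr.
  move=> /andP[? ?] /andP[? ?]; lra.
have chL := chainL R k Z phi M Zrec P1 P2 cphi bndL.
have chR := chainL R k Zr phir M Zrrec P1r P2r cphir bndR.
have k1R : 1 <= k%:R :> R by rewrite ler1n.
have main ep : 0 < ep -> exists N, forall n, (N <= n)%N -> `|t n - tbar| <= ep.
  move=> ep0.
  have ep2 : 0 < ep / 2 by rewrite divr_gt0.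
  have [c1 [c10 [_ H1]]] := chL k.+1 (ep / 2) ep2.
  have [c2 [c20 [_ H2]]] := chR k.+1 (ep / 2) ep2.
  pose c := Num.min c1 c2.
  have cc1 : c <= c1 by rewrite ge_min lexx.
  have cc2 : c <= c2 by rewrite ge_min lexx orbT.
  have c0 : 0 < c by rewrite lt_min c10 c20.
  have contr n a b : (k <= n)%N -> winL R k Z n a -> winL R k Zr n b ->
      ep <= - b - a -> exists a' b', winL R k Z (n + k.+1) a' /\
      winL R k Zr (n + k.+1) b' /\ - b' - a' <= - b - a - c.
    move=> kn wa wb hab.
    have [h|h] := lerP (a + ep / 2) (Z n).
      exists (a + c1), b; split; last split.
      - move=> i /andP[hi1 hi2].
        have ni : (n <= i)%N by clear -hi1; lia.
        have jk : (i - n <= k.+1)%N by clear -hi2; lia.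
        by rewrite -(subnKC ni); apply: (H1 n a kn wa h).
      - exact: iterR n b k.+1 kn wb.
      - by clear -cc1; lra.
    have h' : b + ep / 2 <= Zr n by rewrite /Zr; clear -hab h; lra.
    exists a, (b + c2); split; last split.
    - exact: iterL n a k.+1 kn wa.
    - move=> i /andP[hi1 hi2].
      have ni : (n <= i)%N by clear -hi1; lia.
      have jk : (i - n <= k.+1)%N by clear -hi2; lia.
      by rewrite -(subnKC ni); apply: (H2 n b kn wb h').
    - by clear -cc2; lra.
  have iter N : exists a b, winL R k Z (k + N * k.+1) a /\
      winL R k Zr (k + N * k.+1) b /\
      (- b - a <= ep \/ - b - a <= M - N%:R * c).
    elim: N => [|N [a [b [wa [wb hd]]]]].
      exists (- S), (- S); rewrite mul0n addn0; split => //; split => //.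
      by right; rewrite mul0r /M subr0 opprK.
    have e : (k + N.+1 * k.+1 = (k + N * k.+1) + k.+1)%N by rewrite mulSnr addnA.
    rewrite e.
    have kn : (k <= k + N * k.+1)%N by apply: leq_addr.
    have [small|big] := lerP (- b - a) ep.
      exists a, b; split; first exact: iterL.
      by split; [exact: iterR | left].
    have [a' [b' [wa' [wb' hd']]]] := contr _ a b kn wa wb (ltW big).
    exists a', b'; split => //; split => //; right.
    rewrite -[N.+1]addn1 natrD mulrDl mul1r.
    by case: hd => hd; clear -hd hd' big; lra.
  have S0 : 0 <= S by apply: le_trans (Zb 0%N); exact: normr_ge0.
  have Mc : 0 <= M / c by apply: divr_ge0; [exact: addr_ge0 | exact: ltW].
  pose N := Num.Def.archi_bound (M / c).
  have HN : M < N%:R * c by rewrite -ltr_pdivrMr //; exact: archi_boundP.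
  have [a [b [wa [wb hd]]]] := iter N.
  have hd' : - b - a <= ep by case: hd => hd //; clear -hd HN ep0; lra.
  pose n0 := (k + N * k.+1)%N.
  have kn0 : (k <= n0)%N by apply: leq_addr.
  exists n0.+1 => -[//|m] hm.
  have hm' : (n0 <= m)%N by [].
  have km : (k <= m)%N by apply: leq_trans kn0 hm'.
  have wa' := iterL n0 a (m - n0)%N kn0 wa.
  have wb' := iterR n0 b (m - n0)%N kn0 wb.
  rewrite subnKC in wa' wb' => //.
  have i1 : (m - k <= m <= m)%N by rewrite leq_subr leqnn.
  have i2 : (m - k <= m - k <= m)%N by rewrite leqnn leq_subr.
  have z1 : a <= Z m by apply: wa'.
  have z2 : a <= Z (m - k)%N by apply: wa'.
  have z3 : b <= Zr m by apply: wb'.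
  have z4 : b <= Zr (m - k)%N by apply: wb'.
  have zd := Zdiff m km.
  rewrite /Zr in z3 z4.
  move: zd; set d := t m.+1 - tbar => zd.
  have h1 : k%:R * d <= ep by clear -zd z1 z2 z3 z4 hd'; lra.
  have h2 : - ep <= k%:R * d by clear -zd z1 z2 z3 z4 hd'; lra.
  rewrite ler_norml; apply/andP; split.
    by clear -h2 k1R ep0; nra.
  by clear -h1 k1R ep0; nra.
move=> eps e0; have [N HN] := main (eps / 2) (divr_gt0 e0 (ltr0Sn _ 1)).
by exists N => n /HN; clear -e0; lra.
Qed.

Set Implicit Arguments. Unset Strict Implicit.

Lemma le_int_nm (R : realType) (f g : R -> \bar R) :
  (forall x, (0 <= f x)%E) -> (forall x, (f x <= g x)%E) ->
  (\int[@lebesgue_measure R]_(x in [set: R]) f x <=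
   \int[@lebesgue_measure R]_(x in [set: R]) g x)%E.
Proof.
move=> f0 fg.
have g0 x : (0 <= g x)%E by apply: le_trans (f0 x) (fg x).
rewrite !ge0_integralTE //; apply: ereal_sup_le => _ [h hf <-].
by exists h => // x; apply: le_trans (hf x) (fg x).
Qed.

Lemma lebint_tuple_ge0 (R : realType) n (g : n.-tuple R -> \bar R) :
  (forall x, (0 <= g x)%E) -> (0 <= lebint_tuple g)%E.
Proof.
elim: n g => [|n IH] g g0 /=; first exact: g0.
by apply: integral_ge0 => x _; apply: IH => y.
Qed.

Lemma lebint_tuple_le (R : realType) n (g1 g2 : n.-tuple R -> \bar R) :
  (forall x, (0 <= g1 x)%E) -> (forall x, (g1 x <= g2 x)%E) ->
  (lebint_tuple g1 <= lebint_tuple g2)%E.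
Proof.
elim: n g1 g2 => [|n IH] g1 g2 g10 g12 /=; first exact: g12.
apply: le_int_nm => x; first by apply: lebint_tuple_ge0 => y.
by apply: IH => y.
Qed.

Lemma indf_le (R : realType) T (A B Om : set T) (f : T -> R) :
  (forall x, Om x -> 0 <= f x) -> A `<=` B -> B `<=` Om ->
  forall x, 0 <= \1_A x * f x /\ \1_A x * f x <= \1_B x * f x.
Proof.
move=> f0 AB BO x; rewrite !indicE.
have [xA|xA] := boolP (x \in A).
  have xB : x \in B by rewrite inE; apply: AB; rewrite -inE.
  have fx : 0 <= f x by apply: f0; apply: BO; rewrite -inE.
  by rewrite xB mul1r lexx fx.
rewrite mul0r lexx; split => //.
have [xB|xB] := boolP (x \in B); last by rewrite mul0r.
by rewrite mul1r; apply: f0; apply: BO; rewrite -inE.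
Qed.

Lemma indf_ge0 (R : realType) T (A Om : set T) (f : T -> R) :
  (forall x, Om x -> 0 <= f x) -> A `<=` Om -> forall x, 0 <= \1_A x * f x.
Proof. by move=> f0 AO x; have [] := indf_le f0 (@subset_refl _ A) AO x. Qed.

Lemma indf_mono (R : realType) T (A B Om : set T) (f : T -> R) :
  (forall x, Om x -> 0 <= f x) -> A `<=` B -> B `<=` Om ->
  forall x, \1_A x * f x <= \1_B x * f x.
Proof. by move=> f0 AB BO x; have [] := indf_le f0 AB BO x. Qed.

Lemma mass_props (R : realType) d (Omega : set 'rV[R]_d) (f : 'rV[R]_d -> R)
  (p : R) (x1 x2 : 'rV[R]_d) :
  (forall x, Omega x -> 0 <= f x) ->
  lebint (fun x => ((\1_Omega x) * f x)%:E) = 1%E ->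
  (forall t, 0 <= mass Omega f p x1 x2 t <= 1) /\
  (forall s t, s <= t -> mass Omega f p x1 x2 s <= mass Omega f p x1 x2 t).
Proof.
move=> f0 h1.
pose L t := lebint (fun x => ((\1_(Omega `&` [set y | tau p x1 x2 y < t]) x) * f x)%:E).
have Lge0 t : (0 <= L t)%E.
  apply: lebint_tuple_ge0 => y; rewrite lee_fin.
  apply: (indf_ge0 f0); exact: subIsetl.
have Lle s t : s <= t -> (L s <= L t)%E.
  move=> st; apply: lebint_tuple_le => y; rewrite lee_fin.
    apply: (indf_ge0 f0); exact: subIsetl.
  apply: (indf_mono f0); last exact: subIsetl.
  by move=> z [Oz hz]; split => //=; apply: lt_le_trans hz st.
have L1 t : (L t <= 1)%E.
  rewrite -h1; apply: lebint_tuple_le => y; rewrite lee_fin.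
    apply: (indf_ge0 f0); exact: subIsetl.
  apply: (indf_mono f0); [exact: subIsetl | exact: subset_refl].
have Lfin t : L t \is a fin_num.
  by rewrite ge0_fin_numE // (le_lt_trans (L1 t)) // ltry.
split.
  move=> t; rewrite /mass -/(L t); apply/andP; split; first exact: fine_ge0.
  by rewrite -lee_fin fineK.
move=> s t st; rewrite /mass -/(L s) -/(L t) -lee_fin !fineK //; exact: Lle.
Qed.

Lemma powabs_cont (R : realType) (p : R) : 1 <= p ->
  continuous (fun a : R => powR `|a| p).
Proof.
move=> p1 x.
have p0 : p != 0 by rewrite gt_eqF // (lt_le_trans ltr01).
have [->|x0] := eqVneq x 0.
  apply/cvgrPdist_lt => e e0.
  rewrite /= normr0 powR0 //.
  have m0 : 0 < Num.min e 1 by rewrite lt_min e0 ltr01.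
  near=> y.
  have hy : `|0 - y| < Num.min e 1.
    by near: y; apply: cvgr_dist_lt => //; exact: cvg_id.
  rewrite sub0r normrN in hy.
  rewrite sub0r normrN ger0_norm ?powR_ge0 //.
  have [y0|y0] := eqVneq `|y| 0.
    by rewrite y0 powR0.
  have hy1 : `|y| <= 1 by apply: ltW; apply: lt_le_trans hy _; rewrite ge_min lexx orbT.
  apply: le_lt_trans (ge1r_powR _ p1) _.
    by rewrite hy1 andbT lt_neqAle eq_sym y0 normr_ge0.
  by apply: lt_le_trans hy _; rewrite ge_min lexx.
have nx : 0 < `|x| by rewrite normr_gt0.
apply: (@continuous_comp _ _ _ (@Num.Def.normr R R) (fun a => powR a p)).
  exact: norm_continuous.
apply: differentiable_continuous; apply/derivable1_diffP.
by apply: derivable_powR; rewrite in_itv /= nx.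
Unshelve. all: by end_near.
Qed.

Lemma cont_sum (R : realType) (T : topologicalType) (I : Type) (s : seq I)
  (g : I -> T -> R) : (forall i, continuous (g i)) ->
  continuous (fun x => \sum_(i <- s) g i x).
Proof.
move=> gc; elim: s => [|i s IH].
  under eq_fun do rewrite big_nil; exact: cst_continuous.
under eq_fun do rewrite big_cons.
by move=> x; apply: cvgD; [exact: gc | exact: IH].
Qed.

Lemma enorm_cont (R : realType) d (c : 'rV[R]_d) :
  continuous (fun x : 'rV[R]_d => enorm (x - c)).
Proof.
rewrite /enorm.
move=> x; apply: (@continuous_comp _ _ _ (fun x : 'rV[R]_d => \sum_(i < d) (x - c) ord0 i ^+ 2) (@Num.sqrt R)); last exact: sqrt_continuous.
apply: cont_sum => i y.
pose h := fun z : 'rV[R]_d => z ord0 i - c ord0 i.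
have hc1 := @coord_continuous R 1 d ord0 i y.
have hc : h z @[z --> y] --> h y.
  exact: (cvgB hc1 (cvg_cst (c ord0 i))).
have e : (fun z : 'rV[R]_d => (z - c) ord0 i ^+ 2) = (h \* h)%R.
  by apply: funext => z; rewrite /h /= !mxE expr2.
rewrite e; exact: (cvgM hc hc).
Qed.

Lemma tau_cont (R : realType) d (p : R) (x1 x2 : 'rV[R]_d) : 1 <= p ->
  continuous (tau p x1 x2).
Proof.
move=> p1.
have e c : (fun x : 'rV[R]_d => powR (enorm (x - c)) p) =
           (fun x => powR `|enorm (x - c)| p).
  apply: funext => x; rewrite ger0_norm //; exact: sqrtr_ge0.
have h c : continuous (fun x : 'rV[R]_d => powR (enorm (x - c)) p).
  rewrite e => x.
  apply: (@continuous_comp _ _ _ (fun x : 'rV[R]_d => enorm (x - c)) (fun a => powR `|a| p)).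
    exact: enorm_cont.
  exact: powabs_cont.
by move=> x; exact: (cvgB (h x1 x) (h x2 x)).
Qed.

Lemma tau_sep (R : realType) d (p : R) (x1 x2 : 'rV[R]_d) (tbar : R)
  (K : set 'rV[R]_d) : 1 <= p -> compact K ->
  (forall x, K x -> tau p x1 x2 x != tbar) ->
  exists c, 0 < c /\ forall x, K x -> c <= `|tau p x1 x2 x - tbar|.
Proof.
move=> p1 cK hK.
have [K0|nK] := pselect (K !=set0); last first.
  by exists 1; split => // x Kx; exfalso; apply: nK; exists x.
have g_c : continuous (fun x => `|tau p x1 x2 x - tbar|).
  move=> x; apply: (@continuous_comp _ _ _ (fun x => tau p x1 x2 x - tbar) (@Num.Def.normr R R)).
    exact: (cvgB (@tau_cont R d p x1 x2 p1 x) (cvg_cst tbar)).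
  exact: norm_continuous.
have [c Kc cmin] := compact_EVT_min K0 cK (continuous_subspaceT g_c).
exists `|tau p x1 x2 c - tbar|; split.
  by rewrite normr_gt0 subr_eq0; apply: hK; rewrite -inE.
by move=> x Kx; apply: cmin; rewrite inE.
Qed.

Unset Implicit Arguments. Set Strict Implicit.

Theorem theorem5p14 (R : realType) (d : nat) (Omega : set 'rV[R]_d)
  (f : 'rV[R]_d -> R) (p : R) (x1 x2 : 'rV[R]_d) (h1 h2 : R -> R)
  (kappa : nat) (tbar : R) (t : nat -> R) :
  (* Omega is a bounded Borel set *)
  measurable (tup2row @^-1` Omega) ->
  bounded_set Omega ->
  (* f : Omega -> [0, oo), measurable, int_Omega f = 1 *)
  (forall x, Omega x -> 0 <= f x) ->
  measurable_fun [set: d.-tuple R] (fun y => f (tup2row y)) ->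
  lebint (fun x => ((\1_Omega x) * f x)%:E) = 1%E ->
  1 <= p ->
  Omega x1 -> Omega x2 ->
  (* h1, h2 : [0,1] -> [0,oo) continuous, non-decreasing *)
  {within `[0, 1], continuous h1} -> {within `[0, 1], continuous h2} ->
  {in `[0, 1] &, {homo h1 : a b / a <= b}} ->
  {in `[0, 1] &, {homo h2 : a b / a <= b}} ->
  (forall s, 0 <= s <= 1 -> 0 <= h1 s) ->
  (forall s, 0 <= s <= 1 -> 0 <= h2 s) ->
  (1 <= kappa)%N ->
  (* G is strictly Lipschitz with constant kappa *)
  (forall s u, s != u ->
     `|Gfun Omega f p x1 x2 h1 h2 s - Gfun Omega f p x1 x2 h1 h2 u|
       < kappa%:R * `|s - u|) ->
  (* tbar is the (unique) fixed point of G *)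
  Gfun Omega f p x1 x2 h1 h2 tbar = tbar ->
  (* t_1, ..., t_kappa arbitrary; recursion for n >= kappa *)
  (forall n, (kappa <= n)%N ->
     t n.+1 = kappa%:R^-1 *
       \sum_(n - kappa + 1 <= m < n.+1) Gfun Omega f p x1 x2 h1 h2 (t m)) ->
  t @ \oo --> tbar /\
  (forall K : set 'rV[R]_d, compact K -> K `<=` Omega ->
     (forall x, K x -> tau p x1 x2 x != tbar) ->
     forall eps : R, 0 < eps ->
       \forall n \near \oo, (kappa < n)%N /\
         forall x, K x -> `|psi_of p x1 x2 (t n) x - psibar p x1 x2 tbar x| < eps).
Proof.
move=> mO bO f0 mf hint p1 O1 O2 ch1 ch2 mh1 mh2 h10 h20 k1 HL Hfix Hrec.
have [mb mm] := mass_props p x1 x2 f0 hint.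
have Gmon : forall s s' : R, s <= s' ->
    Gfun Omega f p x1 x2 h1 h2 s' <= Gfun Omega f p x1 x2 h1 h2 s.
  move=> s s' ss'; rewrite /Gfun.
  have ab := mm s s' ss'.
  have /andP[a0 a1] := mb s.
  have /andP[b0 b1] := mb s'.
  apply: lerB.
    apply: mh2; rewrite ?in_itv /=.
    - by apply/andP; split; [rewrite subr_ge0 | rewrite lerBlDr lerDl].
    - by apply/andP; split; [rewrite subr_ge0 | rewrite lerBlDr lerDl].
    - by rewrite lerB.
  by apply: mh1; rewrite ?in_itv /= ?a0 ?a1 ?b0 ?b1.
have conv := @conv_t _ _ _ _ _ k1 HL Gmon Hfix Hrec.
split.
  apply/cvgrPdistC_lt => e e0; have [N HN] := conv e e0.
  by exists N => // n /= Hn; exact: HN.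
move=> K cK KO Kt eps e0.
have [c [c0 hc]] := tau_sep p1 cK Kt.
have [N HN] := conv c c0.
exists (maxn N kappa.+1) => // n /= Hn.
have Nn : (N <= n)%N by apply: leq_trans Hn; exact: leq_maxl.
have kn : (kappa < n)%N by apply: leq_trans Hn; exact: leq_maxr.
split => // x Kx.
have htn := HN n Nn.
have hx := hc x Kx.
have E : (tau p x1 x2 x < t n) = (tau p x1 x2 x < tbar).
  move: htn hx; rewrite ltr_norml ler_normr.
  move: (tau p x1 x2 x) (t n) => a b /andP[u1 u2] /orP[v|v].
    have -> : (a < b) = false by apply/negbTE; rewrite -leNgt; clear -u2 v; lra.
    by apply/esym/negbTE; rewrite -leNgt; clear -v c0; lra.
  have -> : (a < b) = true by clear -u1 v; lra.
  by apply/esym; clear -v c0; lra.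
by rewrite /psi_of /psibar E; case: ifP => _; rewrite subrr normr0.
Qed.
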